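(* Let $n,d$ be positive integers, $\mathbf{c}\in\mathbb{Z}^n_+$, and $\mathbb{P}\subseteq[0,d]^n$ a bounded polyhedron with $\mathbb{P}\cap\mathbb{Z}^n\ne\emptyset$. Let $a_1=d$ and $a_k=d(1+\sum_{j=1}^{k-1}a_j)$ for $k\in\{2,\dots,n\}$. Consider the following cutting plane algorithm. Set $L_0=\{\mathbf{z}=(z_0,\dots,z_n)\in\mathbb{R}^{n+1}: (z_1,\dots,z_n)\in\mathbb{P},\ z_0=\sum_{i=1}^n c_iz_i\}$. At iteration $t=0,1,2,\dots$, let $\mathbf{z}_t^\star$ be a lexicographically maximum element of $L_t$; if $\mathbf{z}_t^\star$ is integral, stop; otherwise let $k=\min\{j: (\mathbf{z}^\star_t)_j\notin\mathbb{Z}\}$ and set $L_{t+1}=L_t\cap\{\mathbf{z}: z_k+\sum_{j=0}^{k-1}a_{k-j}(z_j-\lceil(\mathbf{z}_t^\star)_j\rceil)\le\lfloor(\mathbf{z}_t^\star)_k\rfloor\}$. If $\mathbf{z}_t^\star$ and $\mathbf{z}_{t+1}^\star$ are both not integral, then $\alpha(\mathbf{z}_{t+1}^\star)<_L\alpha(\mathbf{z}_t^\star)$.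
   Context: Lexicographic order on $\mathbb{R}^{n+1}$: $\mathbf{x}<_L\mathbf{y}$ if there is $k\in\{0,\dots,n\}$ with $x_k<y_k$ and $x_i=y_i$ for all $i<k$; $\mathbf{x}\le_L\mathbf{y}$ means $\mathbf{x}<_L\mathbf{y}$ or $\mathbf{x}=\mathbf{y}$. A lexicographically maximum element of a set $T$ is some $\mathbf{t}\in T$ with $\mathbf{s}\le_L\mathbf{t}$ for all $\mathbf{s}\in T$. For a non-integral $\mathbf{y}=(y_0,\dots,y_n)\in\mathbb{R}\times[0,d]^n$, $\alpha(\mathbf{y})$ is the integral vector with $\alpha(\mathbf{y})_i=\lfloor y_i\rfloor$ for $i\le k$ and $\alpha(\mathbf{y})_i=d$ for $i>k$, where $k=\min\{j: y_j\notin\mathbb{Z}\}$. In the algorithm, the cut added at each iteration is the one of index $k$ (the first non-integral coordinate) among the $n+1$ inequalities $z_i+\sum_{j=0}^{i-1}a_{i-j}(z_j-\lceil (\mathbf{z}_t^\star)_j\rceil)\le\lfloor(\mathbf{z}_t^\star)_i\rfloor$, $i=0,\dots,n$; this is the paper's standing assumption that the learned cut selection policy selects this cut. *)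

(* Defs.v *)
From HB Require Import structures.
From mathcomp Require Import all_boot all_order all_algebra.
From mathcomp Require Import reals.
Set Implicit Arguments. Unset Strict Implicit. Unset Printing Implicit Defensive.
Import Order.TTheory GRing.Theory Num.Theory.
Local Open Scope ring_scope.

Section CutDefs.
Variable R : realType.
Variable n : nat.

Definition vec := 'rV[R]_n.+1.

Definition lexlt (x y : vec) : Prop :=
  exists k : 'I_n.+1, x 0 k < y 0 k /\ (forall i : 'I_n.+1, (i < k)%N -> x 0 i = y 0 i).
Definition lexle (x y : vec) : Prop := lexlt x y \/ x = y.

Definition lexmax (T : vec -> Prop) (t : vec) : Prop :=
  T t /\ forall s, T s -> lexle s t.

Definition integral (y : vec) : Prop := forall i : 'I_n.+1, y 0 i \is a Num.int.

Definition first_nonint (y : vec) (k : 'I_n.+1) : bool :=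
  (y 0 k \isn't a Num.int) && [forall j : 'I_n.+1, (j < k)%N ==> (y 0 j \is a Num.int)].

(* the index k = min {j : y_j notin Z} (meaningful when y is non-integral) *)
Definition fni (y : vec) : 'I_n.+1 := odflt ord0 [pick k | first_nonint y k].

Definition alpha (d : nat) (y : vec) : vec :=
  \row_(i < n.+1) (if (i <= fni y)%N then (Num.floor (y 0 i))%:~R else d%:R).

End CutDefs.

(* asum d k = a_1 + ... + a_k, where a_1 = d and a_k = d (1 + sum_{j<k} a_j) *)
Fixpoint asum (d k : nat) : nat :=
  match k with
  | 0 => 0
  | k'.+1 => asum d k' + d * (1 + asum d k')
  end.

Definition acoef (d k : nat) : nat := d * (1 + asum d k.-1).

Section Alg.
Variable R : realType.
Variables (n m d : nat).
Variable c : 'I_n -> nat.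
Variable A : 'M[R]_(m, n).
Variable b : 'cV[R]_m.

Definition inPoly (x : 'rV[R]_n) : Prop :=
  forall i : 'I_m, \sum_(j < n) A i j * x 0 j <= b i 0.

Definition L0 (z : vec R n) : Prop :=
  inPoly (\row_(i < n) z 0 (lift ord0 i)) /\
  z 0 ord0 = \sum_(i < n) (c i)%:R * z 0 (lift ord0 i).

Definition cut (zt z : vec R n) : Prop :=
  let k := fni zt in
  z 0 k + \sum_(j < n.+1 | (j < k)%N)
             (acoef d (k - j))%:R * (z 0 j - (Num.ceil (zt 0 j))%:~R)
    <= (Num.floor (zt 0 k))%:~R.

(* L_t for a run with LP optima z_0, z_1, ... : L_{t+1} = L_t ∩ cut(z_t) *)
Fixpoint Lset (z : nat -> vec R n) (t : nat) : vec R n -> Prop :=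
  match t with
  | 0 => L0
  | t'.+1 => fun y => Lset z t' y /\ cut (z t') y
  end.
End Alg.

(* Main.v *)
Require Import Defs.
From HB Require Import structures.
From mathcomp Require Import all_boot all_order all_algebra.
From mathcomp Require Import reals.
Import Order.TTheory GRing.Theory Num.Theory.
Local Open Scope ring_scope.

Lemma floor_lt_nonint (R : realType) (x : R) :
  x \isn't a Num.int -> (Num.floor x)%:~R < x.
Proof.
move=> Hx; rewrite lt_neqAle floor_le andbT.
by apply: contra Hx; rewrite intrEfloor.
Qed.

Arguments floor_lt_nonint {R x}.

Lemma fniP (R : realType) (n : nat) (y : vec R n) :
  ~ integral y -> first_nonint y (fni y).
Proof.
move=> Hy; rewrite /fni; case: pickP => [k Hk|H] //=.
exfalso; apply: Hy.
suff: forall m (i : 'I_n.+1), nat_of_ord i = m -> y 0 i \is a Num.int.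
  by move=> S i; exact: (S i).
elim/ltn_ind => m IH i Hi.
have := H i; rewrite /first_nonint.
have -> : [forall j : 'I_n.+1, (j < i)%N ==> (y 0 j \is a Num.int)].
  apply/forallP => j; apply/implyP => Hj; apply: (IH j) => //; by rewrite -Hi.
by rewrite andbT => /negbFE.
Qed.

Arguments fniP {R n y}.

Lemma first_nonintE (R : realType) (n : nat) (y : vec R n) k :
  first_nonint y k -> (y 0 k \isn't a Num.int) /\
     forall j : 'I_n.+1, (j < k)%N -> y 0 j \is a Num.int.
Proof.
case/andP => H1 /forallP H2; split => // j Hj.
by have /implyP := H2 j; apply.
Qed.

Arguments first_nonintE {R n y k}.

Lemma fni_ge (R : realType) (n : nat) (y : vec R n) (q : nat) :
  ~ integral y -> (forall j : 'I_n.+1, (j < q)%N -> y 0 j \is a Num.int) ->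
  (q <= fni y)%N.
Proof.
move=> Hy Hq; have [H1 _] := first_nonintE (fniP Hy).
rewrite leqNgt; apply/negP => Hlt.
by move: H1; rewrite (Hq _ Hlt).
Qed.

Arguments fni_ge {R n y q}.

Lemma lexlt_min (R : realType) (n : nat) (u v : vec R n) (i0 : 'I_n.+1) :
  u 0 i0 < v 0 i0 -> (forall i : 'I_n.+1, (i < i0)%N -> u 0 i <= v 0 i) ->
  lexlt u v.
Proof.
move=> Hs Hle.
suff: forall m (i : 'I_n.+1), nat_of_ord i = m -> (i <= i0)%N -> u 0 i < v 0 i -> lexlt u v.
  by move=> S; exact: (S i0 i0 erefl (leqnn _) Hs).
elim/ltn_ind => m IH i Him Hii0 Hi.
case: (boolP [exists j : 'I_n.+1, (j < i)%N && (u 0 j < v 0 j)]).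
  case/existsP => j /andP [Hj Hjs].
  apply: (IH j) => //; first by rewrite -Him.
  exact: ltnW (leq_trans Hj Hii0).
move=> /existsPn Hno; exists i; split => // j Hj.
have := Hno j; rewrite Hj /= => Hn.
have := Hle j (leq_trans Hj Hii0); rewrite le_eqVlt (negbTE Hn) orbF.
by move/eqP.
Qed.
Arguments lexlt_min {R n u v} i0.

Lemma LsetL0 (R : realType) (n m d : nat) (c : 'I_n -> nat)
    (A : 'M[R]_(m, n)) (b : 'cV[R]_m) (z : nat -> vec R n) (t : nat) y :
  Lset d c A b z t y -> L0 c A b y.
Proof. by elim: t y => [|t IH] y //= [H _]; exact: IH. Qed.

Theorem lemma2 (R : realType) (n d m : nat) (c : 'I_n -> nat)
    (A : 'M[R]_(m, n)) (b : 'cV[R]_m)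
    (z : nat -> vec R n) (t : nat) :
  (0 < n)%N -> (0 < d)%N ->
  (* P is contained in [0,d]^n (hence bounded) *)
  (forall x : 'rV[R]_n, inPoly A b x ->
     forall i : 'I_n, 0 <= x 0 i <= d%:R) ->
  (* P contains an integer point *)
  (exists x : 'rV[R]_n, inPoly A b x /\ forall i : 'I_n, x 0 i \is a Num.int) ->
  (* z_s is a lexicographically maximum element of L_s, for s = 0..t+1 *)
  (forall s, (s <= t.+1)%N -> lexmax (Lset d c A b z s) (z s)) ->
  (* the algorithm has not stopped before iteration t+1 ... *)
  (forall s, (s < t)%N -> ~ integral (z s)) ->
  (* ... and z_t, z_{t+1} are both not integral *)
  ~ integral (z t) -> ~ integral (z t.+1) ->
  lexlt (alpha d (z t.+1)) (alpha d (z t)).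
Proof.
move=> n0 d0 Hbd Hint Hmax Hprev Hnt Hnt1.
have [[HLt Hcut] _] := Hmax t.+1 (leqnn _).
have [_ Hle] := Hmax t (leqnSn _).
have Hyy := Hle _ HLt.
have HL0 := @LsetL0 R n m d c A b z t _ HLt.
set y := z t in Hnt Hcut Hyy *; set y' := z t.+1 in Hnt1 HLt Hcut Hyy HL0 *.
have Hbnd : forall q : 'I_n.+1, (0 < q)%N -> y' 0 q <= d%:R.
  move=> q q0; case: (unliftP ord0 q) => [q' Eq|Eq]; last by rewrite Eq in q0.
  by have := Hbd _ HL0.1 q'; rewrite mxE -Eq => /andP [_ ->].
have [Hk Hbk] := first_nonintE (fniP Hnt).
have [Hk' Hbk'] := first_nonintE (fniP Hnt1).
set k := fni y in Hk Hbk Hcut *.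
set k' := fni y' in Hk' Hbk' *.
have Hcutk : (forall j : 'I_n.+1, (j < k)%N -> y' 0 j = y 0 j) ->
    y' 0 k <= (Num.floor (y 0 k))%:~R.
  move=> Heq; move: Hcut; rewrite /cut /= -/k big1 ?addr0 //.
  by move=> j Hj; rewrite Heq // ceilK ?Hbk // subrr mulr0.
have Hnoeq : ~ (forall j : 'I_n.+1, (j <= k)%N -> y' 0 j = y 0 j).
  move=> Heq; have := Hcutk (fun j Hj => Heq j (ltnW Hj)); rewrite Heq // => Hle'.
  by have := floor_lt_nonint Hk; rewrite ltNge Hle'.
have Ha' : forall i : 'I_n.+1, (i <= k')%N -> alpha d y' 0 i <= y' 0 i.
  by move=> i Hi; rewrite mxE -/k' Hi floor_le.
have Ha : forall i : 'I_n.+1, (i < k)%N -> alpha d y 0 i = y 0 i.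
  by move=> i Hi; rewrite mxE -/k ltnW // floorK // Hbk.
case: Hyy => [[p [Hp Hpre]] | Heq]; last first.
  by exfalso; apply: Hnoeq => j _; rewrite Heq.
case: (ltngtP p k) => Hpk.
- have Hpk' : (p <= k')%N.
    apply: (fni_ge (q:=p) Hnt1) => j Hj; by rewrite Hpre // Hbk // (ltn_trans Hj Hpk).
  apply: (lexlt_min p).
    by apply: le_lt_trans (Ha' _ Hpk') _; rewrite (Ha _ Hpk).
  move=> i Hi; apply: le_trans (Ha' _ (ltnW (leq_trans Hi Hpk'))) _.
  by rewrite Ha ?(ltn_trans Hi Hpk) // Hpre.
- by exfalso; apply: Hnoeq => j Hj; apply: Hpre; apply: leq_ltn_trans Hj Hpk.
- have Heqk : forall j : 'I_n.+1, (j < k)%N -> y' 0 j = y 0 j.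
    by move=> j Hj; apply: Hpre; rewrite Hpk.
  have Hkk' : (k <= k')%N by apply: (fni_ge (q:=k) Hnt1) => j Hj; rewrite Heqk // Hbk.
  have Hy'le : forall i : 'I_n.+1, (k <= i)%N -> (i <= k')%N -> y' 0 i <= alpha d y 0 i.
    move=> i Hki Hik'; rewrite mxE -/k; case: (ltngtP i k) => Hik.
    + by rewrite leqNgt Hik in Hki.
    + by rewrite ?leqNgt ?Hik /=; apply: Hbnd; apply: leq_ltn_trans Hik.
    + rewrite ?Hik ?leqnn; have -> : i = k by apply: val_inj.
      exact: Hcutk Heqk.
  apply: (lexlt_min k').
    apply: lt_le_trans (Hy'le _ Hkk' (leqnn _)).
    by rewrite mxE -/k' leqnn; exact: floor_lt_nonint Hk'.
  move=> i Hi; apply: le_trans (Ha' _ (ltnW Hi)) _.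
  case: (ltnP i k) => Hik; first by rewrite Ha // Heqk.
  by apply: Hy'le => //; exact: ltnW.
Qed.
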